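(* Let $q$ be a square prime power and let $\mathcal{B}$ be a Baer subplane of $PG(2,q)$; let $n=q+\sqrt{q}+1$. Then $\mathcal{B}$ is an optimal $(1,\mu)$-saturating $n$-set with $\mu=\frac{1}{2}(q+\sqrt{q})$. A linear code $C$ over $\mathbb{F}_q$ corresponding to $\mathcal{B}$ is an $[n,n-3,3]_q$ code with covering radius $2$, and it is a $(2,\mu)$-APMCF code.
   Context: $PG(N,q)$ is the $N$-dimensional projective space over $\mathbb{F}_q$. A Baer subplane of $PG(2,q)$, $q$ a square, is a subplane of order $\sqrt q$ (e.g. the set of points having homogeneous coordinates in $\mathbb{F}_{\sqrt q}$). For a point set $S$, a secant of $S$ is a line $\ell$ with $|\ell\cap S|\ge2$, counted with multiplicity $\binom{|\ell\cap S|}{2}$. A set $S$ of $n$ points of $PG(N,q)$ is a $(1,\mu)$-saturating $n$-set if (M1) $S$ spans $PG(N,q)$, (M2) $S\neq PG(N,q)$, and (M3) every point $Q\notin S$ lies on secants of $S$ whose multiplicities sum to at least $\mu$; it is optimal if for every $Q\notin S$ this sum is exactly $\mu$. A linear code of length $n$ over $\mathbb{F}_q$ corresponds to $S=\{P_1,\dots,P_n\}\subset PG(N,q)$ if it has a parity-check matrix whose $i$-th column is a homogeneous coordinate vector of $P_i$. An $[n,k,d]_q$ code is a linear code of length $n$, dimension $k$ and minimum distance $d$; its covering radius $R$ is $\max_{x\in\mathbb{F}_q^n} d(x,C)$ (Hamming distance). A code $C$ with covering radius $R$ is an $(R,\mu)$-APMCF code if every $x\in\mathbb{F}_q^n$ with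 $d(x,C)=R$ is at distance exactly $R$ from exactly $\mu$ codewords. *)

(* Defs.v *)
From mathcomp Require Import all_boot all_order all_algebra.
Set Implicit Arguments. Unset Strict Implicit. Unset Printing Implicit Defensive.
Import GRing.Theory.
Local Open Scope ring_scope.

Section ProjGeom.
Variable F : finFieldType.

Definition pnormal k (v : 'rV[F]_k) : bool :=
  [exists i : 'I_k, (v 0 i == 1) && [forall j : 'I_k, (j < i)%N ==> (v 0 j == 0)]].

(** Points of PG(N, F): 1-dim subspaces of F^(N+1), via normalized representative. *)
Definition point (N : nat) := {v : 'rV[F]_N.+1 | pnormal v}.

Variable N : nat.

Definition pvec (P : point N) : 'rV[F]_N.+1 := val P.

Definition pline (P Q : point N) : {set point N} :=
  [set R : point N | (pvec R <= col_mx (pvec P) (pvec Q))%MS].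

Definition plines : {set {set point N}} :=
  [set l : {set point N} | [exists P : point N, exists Q : point N,
                               (P != Q) && (l == pline P Q)]].

Definition pcollinear (P Q R : point N) : bool :=
  (\rank (col_mx (pvec P) (col_mx (pvec Q) (pvec R))) <= 2)%N.

Definition secmult (S : {set point N}) (Q : point N) : nat :=
  (\sum_(l in plines | (Q \in l) && (1 < #|l :&: S|)%N) 'C(#|l :&: S|, 2))%N.

Definition spans (S : {set point N}) : bool :=
  row_full (\sum_(P in S) <<pvec P>>)%MS.

Definition saturating (S : {set point N}) (mu : nat) : Prop :=
  [/\ spans S, S != [set: point N] &
      forall Q, Q \notin S -> (mu <= secmult S Q)%N].

Definition optimal_saturating (S : {set point N}) (mu : nat) : Prop :=
  saturating S mu /\ forall Q, Q \notin S -> secmult S Q = mu.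

Definition subplane_of_order (m : nat) (S : {set point N}) : Prop :=
  exists L : {set {set point N}},
  [/\ L \subset plines,
      forall P Q, P \in S -> Q \in S -> P != Q ->
        #|[set l in L | (P \in l) && (Q \in l)]| = 1%N,
      forall l1 l2, l1 \in L -> l2 \in L -> l1 != l2 ->
        #|l1 :&: l2 :&: S| = 1%N,
      (exists P1 P2 P3 P4,
        [/\ [&& P1 \in S, P2 \in S, P3 \in S & P4 \in S],
            uniq [:: P1; P2; P3; P4] &
            [&& ~~ pcollinear P1 P2 P3, ~~ pcollinear P1 P2 P4,
                ~~ pcollinear P1 P3 P4 & ~~ pcollinear P2 P3 P4]]) &
      forall l, l \in L -> #|l :&: S| = m.+1].

End ProjGeom.

(** Baer subplane of PG(2,q), q = r^2: subplane of order r. *)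
Definition baer_subplane (F : finFieldType) (r : nat) (S : {set point F 2}) : Prop :=
  subplane_of_order r S.

Section Codes.
Variable F : finFieldType.
Variable n : nat.

(** A linear code of length n is represented by a matrix whose row space is the code. *)
Definition codeset (C : 'M[F]_n) : {set 'rV[F]_n} := [set x | (x <= C)%MS].

Definition wt (x : 'rV[F]_n) : nat := #|[set i : 'I_n | x 0 i != 0]|.
Definition hdist (x y : 'rV[F]_n) : nat := wt (x - y).

Definition code_dim (C : 'M[F]_n) : nat := \rank C.

Definition min_dist (C : 'M[F]_n) : nat :=
  \big[minn/n]_(c in codeset C | c != 0) wt c.

(** d(x, C) = min over codewords (all distances are <= n). *)
Definition dist_code (C : 'M[F]_n) (x : 'rV[F]_n) : nat :=
  \big[minn/n]_(c in codeset C) hdist x c.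

Definition covering_radius (C : 'M[F]_n) : nat :=
  \max_(x : 'rV[F]_n) dist_code C x.

Definition is_APMCF (C : 'M[F]_n) (R mu : nat) : Prop :=
  covering_radius C = R /\
  forall x, dist_code C x = R -> #|[set c in codeset C | hdist x c == R]| = mu.

(** Code with parity-check matrix H: {x | H x^T = 0} = row space of kermx H^T. *)
Definition code_of_pcm m (H : 'M[F]_(m, n)) : 'M[F]_n := kermx H^T.

End Codes.

Definition pcm_of_points (F : finFieldType) (N n : nat)
    (H : 'M[F]_(N.+1, n)) (S : {set point F N}) : Prop :=
  exists Pt : 'I_n -> point F N,
    [/\ injective Pt, S = [set Pt i | i : 'I_n] &
        forall i, ((col i H)^T == pvec (Pt i))%MS].

(* Main.v *)
Require Import Defs.
From mathcomp Require Import all_boot all_order all_algebra zify.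

Section Helpers.
Set Implicit Arguments. Unset Strict Implicit. Unset Printing Implicit Defensive.
Import GRing.Theory.
Local Open Scope ring_scope.

Section Pts.
Variable F : finFieldType.
Variable N : nat.
Local Notation pt := (point F N).

Lemma pvec_neq0 (P : pt) : pvec P != 0.
Proof.
case: P => v Hv; rewrite /pvec /=; move: (Hv); rewrite /pnormal => /existsP [i /andP [/eqP vi _]].
apply/eqP => v0; move: vi; rewrite v0 mxE => /eqP; by rewrite eq_sym oner_eq0.
Qed.

Lemma normalize (v : 'rV[F]_N.+1) : v != 0 -> exists P : pt, (pvec P == v)%MS.
Proof.
move=> vn0.
have [i0 Hi0] : exists i, v 0 i != 0.
  apply/existsP; apply: contraR vn0 => /existsPn H; apply/eqP/rowP => j.
  by rewrite mxE; move/negPn: (H j) => /eqP.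
case: (@arg_minnP _ i0 (fun j => v 0 j != 0) (fun j : 'I_N.+1 => (j : nat)) Hi0) => i Hi Hmin.
set w := (v 0 i)^-1 *: v.
have Hw : pnormal w.
  apply/existsP; exists i; rewrite /w !mxE mulVf // eqxx /=.
  apply/forallP => j; apply/implyP => ji; rewrite mxE.
  case: (eqVneq (v 0 j) 0) => [-> | Hj]; first by rewrite mulr0.
  by have := Hmin j Hj; rewrite leqNgt ji.
exists (exist _ w Hw); rewrite /pvec /=.
by apply/eqmxP; apply: eqmx_scale; rewrite invr_eq0.
Qed.

Lemma pvec_inj (P Q : pt) : (pvec P == pvec Q)%MS -> P = Q.
Proof.
move=> /andP [/sub_rVP [c Hc] _].
apply: val_inj.
case: P Hc => p Hp; case: Q => u Hu; rewrite /pvec /= => Hc.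
move: (Hp); rewrite /pnormal => /existsP [i /andP [/eqP pi /forallP pz]].
move: (Hu); rewrite /pnormal => /existsP [k /andP [/eqP uk /forallP uz]].
have Pc : forall j, p 0 j = c * u 0 j by move=> j; rewrite Hc mxE.
case: (ltngtP i k) => [ik | ki | ik].
- by move: pi; rewrite Pc (eqP (implyP (uz i) ik)) mulr0 => /eqP; rewrite eq_sym oner_eq0.
- have c0 : c = 0 by move: (eqP (implyP (pz k) ki)); rewrite Pc uk mulr1.
  by move: pi; rewrite Pc c0 mul0r => /eqP; rewrite eq_sym oner_eq0.
- move: ik => /eqP ik; have ik2 : i = k by apply/val_inj/eqP. subst k.
  have c1 : c = 1 by move: (Pc i); rewrite pi uk mulr1.
  by rewrite Hc c1 scale1r.
Qed.

Lemma card_subsp m (U : 'M[F]_(m, N.+1)) :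
  #|[set v : 'rV[F]_N.+1 | (v <= U)%MS]| = (#|F| ^ \rank U)%N.
Proof.
have -> : [set v : 'rV[F]_N.+1 | (v <= U)%MS] =
   [set x *m row_base U | x : 'rV[F]_(\rank U)].
  apply/setP => v; rewrite inE; apply/idP/imsetP.
  - rewrite -(eq_row_base U) => /submxP [D ->]; by exists D.
  - move=> [x _ ->]; by rewrite (submx_trans (submxMl _ _)) // eq_row_base.
rewrite card_imset; last exact: row_free_inj (row_base_free U).
by rewrite card_mx mul1n.
Qed.

Lemma card_pts m (U : 'M[F]_(m, N.+1)) :
  (#|[set P : pt | (pvec P <= U)%MS]| * (#|F| - 1))%N = (#|F| ^ \rank U - 1)%N.
Proof.
set A := [set P : pt | (pvec P <= U)%MS].
set C := [set c : F | c != 0].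
have cC : #|C| = (#|F| - 1)%N.
  have -> : C = [set~ 0] by apply/setP => c; rewrite !inE.
  by rewrite cardsC1 subn1.
have nz : [set v : 'rV[F]_N.+1 | (v <= U)%MS & v != 0] =
   [set cp.1 *: pvec cp.2 | cp in setX C A].
  apply/setP => v; rewrite inE; apply/andP/imsetP.
  - move=> [vU vn0]; have [P /andP [Pv vP]] := normalize vn0.
    move/sub_rVP: vP => [c Hc].
    exists (c, P); last by [].
    rewrite !inE /=; apply/andP; split.
      by apply: contraNneq vn0 => c0; rewrite Hc c0 scale0r.
    exact: submx_trans Pv vU.
  - move=> [[c P]]; rewrite !inE /= => /andP [cn0 PU] ->; split.
      by rewrite scalemx_sub.
    by rewrite scaler_eq0 negb_or cn0 pvec_neq0.
have : #|[set v : 'rV[F]_N.+1 | (v <= U)%MS & v != 0]| = (#|F| ^ \rank U - 1)%N.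
  rewrite -card_subsp (cardsD1 0 [set v : 'rV[F]_N.+1 | (v <= U)%MS]) inE sub0mx add1n subn1 /=.
  by apply: eq_card => v; rewrite !inE andbC.
rewrite nz card_in_imset ?cardsX ?cC 1?mulnC //.
move=> [c P] [d Q]; rewrite !inE /= => /andP [cn0 _] /andP [dn0 _] E.
have PQ : P = Q.
  apply: pvec_inj; apply/andP; split; apply/sub_rVP.
  - exists (c^-1 * d); by rewrite -scalerA -E scalerA mulVf // scale1r.
  - exists (d^-1 * c); by rewrite -scalerA E scalerA mulVf // scale1r.
subst Q; congr (_, _).
have : (c - d) *: pvec P = 0 by rewrite scalerBl E subrr.
by move/eqP; rewrite scaler_eq0 (negbTE (pvec_neq0 P)) orbF subr_eq0 => /eqP.
Qed.

End Pts.

Section Lines.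
Variable F : finFieldType.
Variable N : nat.
Local Notation pt := (point F N).

Lemma sub_pvec (P Q : pt) : (pvec P <= pvec Q)%MS -> P = Q.
Proof.
move=> H; apply: pvec_inj.
have := mxrank_leqif_eq H; rewrite !rank_rV !pvec_neq0 => [[_ <-]].
by [].
Qed.

Lemma span2P (u w v : 'rV[F]_N.+1) :
  reflect (exists a b, v = a *: u + b *: w) (v <= col_mx u w)%MS.
Proof.
rewrite -addsmxE; apply: (iffP sub_addsmxP).
- move=> [[x y] /= ->]; exists (x 0 0), (y 0 0).
  by rewrite {1}[x]mx11_scalar {1}[y]mx11_scalar !mul_scalar_mx.
- move=> [a [b ->]]; exists (a%:M, b%:M) => /=; by rewrite !mul_scalar_mx.
Qed.

Lemma mem_pline (R P Q : pt) : (R \in pline P Q) = (pvec R <= col_mx (pvec P) (pvec Q))%MS.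
Proof. by rewrite inE. Qed.

Lemma pline_l (P Q : pt) : P \in pline P Q.
Proof. by rewrite inE -addsmxE addsmxSl. Qed.
Lemma pline_r (P Q : pt) : Q \in pline P Q.
Proof. by rewrite inE -addsmxE addsmxSr. Qed.

Lemma rank_pline (P Q : pt) : P != Q -> \rank (col_mx (pvec P) (pvec Q)) = 2%N.
Proof.
move=> PQ; apply/eqP; rewrite eqn_leq rank_leq_row /=.
have sP : (pvec P <= col_mx (pvec P) (pvec Q))%MS by rewrite -addsmxE addsmxSl.
have sQ : (pvec Q <= col_mx (pvec P) (pvec Q))%MS by rewrite -addsmxE addsmxSr.
have := mxrankS sP; rewrite rank_rV pvec_neq0 /=.
rewrite leq_eqVlt => /orP [/eqP E | //].
have := mxrank_leqif_eq sP; rewrite rank_rV pvec_neq0 -E => [[_]]; rewrite eqxx => /esym H.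
have QP : (pvec Q <= pvec P)%MS by rewrite (submx_trans sQ) // (eqmxP H).
by rewrite (sub_pvec QP) eqxx in PQ.
Qed.

Lemma pline_eq (P Q X Y : pt) : P != Q -> X != Y -> X \in pline P Q -> Y \in pline P Q ->
  pline X Y = pline P Q.
Proof.
move=> PQ XY; rewrite !inE => HX HY.
have S : (col_mx (pvec X) (pvec Y) <= col_mx (pvec P) (pvec Q))%MS by rewrite col_mx_sub HX HY.
have := mxrank_leqif_eq S; rewrite !rank_pline // => [[_]]; rewrite eqxx => /esym /eqmxP E.
by apply/setP => R; rewrite !inE E.
Qed.

Lemma plinesP (l : {set pt}) :
  reflect (exists P Q, P != Q /\ l = pline P Q) (l \in plines F N).
Proof.
rewrite inE; apply: (iffP existsP) => [[P /existsP [Q /andP [PQ /eqP ->]]] | [P [Q [PQ ->]]]].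
  by exists P, Q.
by exists P; apply/existsP; exists Q; rewrite PQ eqxx.
Qed.

Lemma plines_eq (l : {set pt}) (X Y : pt) : l \in plines F N -> X != Y -> X \in l -> Y \in l ->
  l = pline X Y.
Proof.
move=> /plinesP [P [Q [PQ ->]]] XY HX HY; by rewrite (pline_eq PQ XY).
Qed.

Lemma pline_in (P Q : pt) : P != Q -> pline P Q \in plines F N.
Proof. by move=> PQ; apply/plinesP; exists P, Q. Qed.

Lemma card_pline (P Q : pt) : P != Q -> #|pline P Q| = (#|F|).+1.
Proof.
move=> PQ.
have := card_pts (col_mx (pvec P) (pvec Q)); rewrite rank_pline //.
have q1 : (1 < #|F|)%N by rewrite (cardD1 0) (cardD1 1) !inE oner_eq0.
have -> : (#|F| ^ 2 - 1 = #|F|.+1 * (#|F| - 1))%N.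
  move: q1; set k := #|F|; rewrite expnS expn1 => q1; nia.
move=> E; apply/eqP; rewrite -(eqn_pmul2r (_ : 0 < #|F| - 1)%N) ?subn_gt0 //.
by rewrite -E /pline.
Qed.

Lemma card_rank2 m (U : 'M[F]_(m, N.+1)) : \rank U = 2%N ->
  #|[set P : pt | (pvec P <= U)%MS]| = (#|F|).+1.
Proof.
move=> rU; have := card_pts U; rewrite rU.
have q1 : (1 < #|F|)%N by rewrite (cardD1 0) (cardD1 1) !inE oner_eq0.
have -> : (#|F| ^ 2 - 1 = #|F|.+1 * (#|F| - 1))%N.
  move: q1; set k := #|F|; rewrite expnS expn1 => q1; nia.
move=> E; apply/eqP; rewrite -(eqn_pmul2r (_ : 0 < #|F| - 1)%N) ?subn_gt0 //.
by rewrite E.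
Qed.

Lemma pcoll_of (P1 P2 P3 : pt) : P3 \in pline P1 P2 -> pcollinear P1 P2 P3.
Proof.
rewrite inE => H; rewrite /pcollinear.
have S : (col_mx (pvec P1) (col_mx (pvec P2) (pvec P3)) <= col_mx (pvec P1) (pvec P2))%MS.
  rewrite !col_mx_sub H andbT; apply/andP; split; by rewrite -addsmxE ?addsmxSl ?addsmxSr.
exact: leq_trans (mxrankS S) (rank_leq_row _).
Qed.

End Lines.

Lemma double_count (T1 T2 : finType) (A : {set T1}) (B : {set T2}) (R : T1 -> T2 -> bool) :
  (\sum_(x in A) #|[set y in B | R x y]| = \sum_(y in B) #|[set x in A | R x y]|)%N.
Proof.
have E1 : forall x, #|[set y in B | R x y]| = (\sum_(y in B) (R x y : nat))%N.
  move=> x; rewrite -sum1_card [RHS]big_mkcond [LHS]big_mkcond /=; apply: eq_bigr => y _.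
  by rewrite !inE; case: (y \in _); case: (R x y).
have E2 : forall y, #|[set x in A | R x y]| = (\sum_(x in A) (R x y : nat))%N.
  move=> y; rewrite -sum1_card [RHS]big_mkcond [LHS]big_mkcond /=; apply: eq_bigr => x _.
  by rewrite !inE; case: (x \in _); case: (R x y).
under eq_bigr do rewrite E1.
under [RHS]eq_bigr do rewrite E2.
exact: exchange_big.
Qed.

Section Baer.
Variable F : finFieldType.
Local Notation pt := (point F 2).
Variable r : nat.
Hypothesis cardF : #|F| = (r ^ 2)%N.
Variable B : {set pt}.
Variable L : {set {set pt}}.
Hypothesis h1 : L \subset plines F 2.
Hypothesis h2 : forall P Q, P \in B -> Q \in B -> P != Q ->
        #|[set l in L | (P \in l) && (Q \in l)]| = 1%N.
Hypothesis h3 : forall l1 l2, l1 \in L -> l2 \in L -> l1 != l2 ->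
        #|l1 :&: l2 :&: B| = 1%N.
Hypothesis h5 : forall l, l \in L -> #|l :&: B| = r.+1.
Variables P1 P2 P3 : pt.
Hypothesis HP : [&& P1 \in B, P2 \in B & P3 \in B].
Hypothesis P12 : P1 != P2.
Hypothesis ncol : ~~ pcollinear P1 P2 P3.

Lemma r_ge1 : (1 <= r)%N.
Proof.
have q1 : (1 < #|F|)%N by rewrite (cardD1 0) (cardD1 1) !inE oner_eq0.
by move: q1; rewrite cardF; case: r.
Qed.

Lemma D1 P Q : P \in B -> Q \in B -> P != Q -> pline P Q \in L.
Proof.
move=> PB QB PQ; have := h2 PB QB PQ.
move=> /eqP /cards1P [l Hl].
have : l \in [set l in L | (P \in l) && (Q \in l)] by rewrite Hl set11.
rewrite inE => /andP [lL /andP [Pl Ql]].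
have lp : l \in plines F 2 by apply: (subsetP h1).
by rewrite -(plines_eq lp PQ Pl Ql).
Qed.

Lemma D2 P Q : P \in B -> Q \in B -> P != Q -> #|pline P Q :&: B| = r.+1.
Proof. by move=> PB QB PQ; apply: h5; apply: D1. Qed.

Lemma D3 l : l \in plines F 2 -> (1 < #|l :&: B|)%N -> l \in L.
Proof.
move=> lp /card_gt1P [X [Y [XI YI XY]]].
move: XI YI; rewrite !inE => /andP [Xl XB] /andP [Yl YB].
by rewrite (plines_eq lp XY Xl Yl) D1.
Qed.

Lemma D4 l1 l2 : l1 \in L -> l2 \in L -> l1 != l2 -> exists Z, [/\ Z \in l1, Z \in l2 & Z \in B].
Proof.
move=> a b c; have := h3 a b c => /eqP /cards1P [Z HZ].
have : Z \in l1 :&: l2 :&: B by rewrite HZ set11.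
by rewrite !inE => /andP [/andP [? ?] ?]; exists Z.
Qed.

Lemma P3_notin : P3 \notin pline P1 P2.
Proof. by apply: contra ncol; apply: pcoll_of. Qed.

Lemma cardB : #|B| = (r ^ 2 + r + 1)%N.
Proof.
move: HP => /and3P [B1 B2 B3].
set l := pline P1 P2; set P := P3.
have lL : l \in L by apply: D1.
have Pl : P \notin l := P3_notin.
set A := l :&: B.
set S := B :\ P.
have R1 : forall Y, Y \in S -> #|[set X in A | Y \in pline P X]| = 1%N.
  move=> Y; rewrite !inE => /andP [YP YB].
  have PY : P != Y by rewrite eq_sym.
  have lPY : pline P Y \in L by apply: D1.
  have ln : pline P Y != l by apply: contraNneq Pl => <-; apply: pline_l.
  rewrite -[RHS](h3 lPY lL ln); apply: eq_card => X; rewrite !inE -!mem_pline.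
  apply/andP/andP => [[/andP [Xl XB] HY] | [/andP [XPY Xl] XB]].
  - have PX : P != X by apply: contraNneq Pl => ->.
    split; last done; rewrite Xl andbT (pline_eq PX PY (pline_l _ _) HY); exact: pline_r.
  - have PX : P != X by apply: contraNneq Pl => ->.
    rewrite Xl XB; split => //.
    rewrite (pline_eq PY PX (pline_l _ _) XPY); exact: pline_r.
have R2 : forall X, X \in A -> #|[set Y in S | Y \in pline P X]| = r.
  move=> X; rewrite !inE -mem_pline => /andP [Xl XB].
  have PX : P != X by apply: contraNneq Pl => ->.
  have := D2 B3 XB PX; rewrite (cardsD1 P) in_setI pline_l B3 add1n => [[<-]].
  by apply: eq_card => Y; rewrite !inE -!mem_pline; case: (Y == P); case: (Y \in B); case: (Y \in pline P X).
have := double_count A S (fun X Y => Y \in pline P X).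
rewrite (eq_bigr (fun _ => r) R2) (eq_bigr (fun _ => 1%N) R1) !sum_nat_const muln1.
rewrite (h5 lL) /S (cardsD1 P B) B3 add1n => /= E.
rewrite -E; lia.
Qed.


Lemma sec_exists Q : Q \notin B ->
  exists l, [/\ l \in plines F 2, Q \in l & (1 < #|l :&: B|)%N].
Proof.
move=> QB.
case: (boolP [exists l, [&& l \in plines F 2, Q \in l & (1 < #|l :&: B|)%N]]).
  by move=> /existsP [l /and3P [a b c]]; exists l.
move=> /existsPn nos; exfalso.
set M := cokermx (pvec Q).
have rM : \rank M = 2%N by rewrite mxrank_coker rank_rV pvec_neq0.
pose f (X : pt) := odflt X [pick P : pt | (pvec P == pvec X *m M)%MS].
have xM0 : forall X, X \in B -> pvec X *m M != 0.
  move=> X XB; apply: contraNneq QB => H.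
  have : (pvec X <= pvec Q)%MS by rewrite submxE H.
  by move/sub_pvec => <-.
have fX : forall X, X \in B -> (pvec (f X) == pvec X *m M)%MS.
  move=> X XB; rewrite /f; case: pickP => [P -> // | H].
  have [P HP'] := normalize (xM0 X XB).
  by move: (H P); rewrite HP'.
have finj : {in B &, injective f}.
  move=> X Y XB YB E.
  have : (pvec X *m M <= pvec Y *m M)%MS.
    have [_ e1] := andP (fX X XB); have [e2 _] := andP (fX Y YB).
    by apply: submx_trans e1 _; rewrite E.
  move/sub_rVP => [c Hc].
  have : ((pvec X - c *: pvec Y) *m M == 0) by rewrite mulmxBl -scalemxAl Hc subrr.
  rewrite -submxE => /sub_rVP [d Hd].
  have XQY : X \in pline Q Y.
    rewrite mem_pline; apply/span2P; exists d, c.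
    by rewrite -Hd subrK.
  apply/eqP; apply: contraT => XY.
  have QY : Q != Y by apply: contraNneq QB => ->.
  case/negP: (nos (pline Q Y)); rewrite pline_in // pline_l /=.
  by apply/card_gt1P; exists X, Y; rewrite !in_setI XQY XB pline_r YB.
have sub : f @: B \subset [set P : pt | (pvec P <= M)%MS].
  apply/subsetP => P /imsetP [X XB ->]; rewrite inE.
  by move: (fX X XB) => /andP [H _]; apply: submx_trans H (submxMl _ _).
have := subset_leq_card sub; rewrite card_in_imset // card_rank2 // cardB cardF.
have := r_ge1; lia.
Qed.

Lemma sec_unique Q l1 l2 : Q \notin B ->
  l1 \in plines F 2 -> Q \in l1 -> (1 < #|l1 :&: B|)%N ->
  l2 \in plines F 2 -> Q \in l2 -> (1 < #|l2 :&: B|)%N -> l1 = l2.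
Proof.
move=> QB p1 q1 c1 p2 q2 c2.
apply/eqP; apply: contraT => ne.
have [Z [Z1 Z2 ZB]] := D4 (D3 p1 c1) (D3 p2 c2) ne.
have QZ : Q != Z by apply: contraNneq QB => ->.
by rewrite (plines_eq p1 QZ q1 Z1) (plines_eq p2 QZ q2 Z2) eqxx in ne.
Qed.

Lemma secmult_val Q : Q \notin B -> secmult B Q = ((r ^ 2 + r) %/ 2)%N.
Proof.
move=> QB; have [l0 [p0 q0 c0]] := sec_exists QB.
rewrite /secmult (big_pred1 l0).
  rewrite (h5 (D3 p0 c0)) bin2 /= -divn2; by congr (divn _ _); rewrite mulSn mulnn addnC.
move=> l /=; apply/idP/eqP.
  move=> /andP [lp /andP [ql cl]]; exact: (sec_unique QB lp ql cl p0 q0 c0).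
by move=> ->; rewrite p0 q0 c0.
Qed.


Lemma rank3 : \rank (col_mx (pvec P1) (col_mx (pvec P2) (pvec P3))) = 3%N.
Proof.
apply/eqP; rewrite eqn_leq rank_leq_col /=.
by move: ncol; rewrite /pcollinear ltnNge.
Qed.

Lemma sum_sup (S : {set pt}) : [&& P1 \in S, P2 \in S & P3 \in S] ->
  (col_mx (pvec P1) (col_mx (pvec P2) (pvec P3)) <= \sum_(P in S) <<pvec P>>)%MS.
Proof.
move=> /and3P [a b c].
rewrite !col_mx_sub; apply/and3P; split.
- by apply: (sumsmx_sup P1) => //; rewrite genmxE.
- by apply: (sumsmx_sup P2) => //; rewrite genmxE.
- by apply: (sumsmx_sup P3) => //; rewrite genmxE.
Qed.

Lemma spansB : spans B.
Proof.
rewrite /spans /row_full; apply/eqP/anti_leq; rewrite rank_leq_col /=.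
by rewrite -{1}rank3 mxrankS // sum_sup.
Qed.

Lemma card_allpts : #|[set: pt]| = (#|F| ^ 2 + #|F| + 1)%N.
Proof.
have := card_pts (1%:M : 'M[F]_3); rewrite mxrank1.
have -> : [set P : pt | (pvec P <= 1%:M)%MS] = [set: pt] by apply/setP => P; rewrite !inE submx1.
have q1 : (1 < #|F|)%N by rewrite (cardD1 0) (cardD1 1) !inE oner_eq0.
have -> : (#|F| ^ 3 - 1 = (#|F| ^ 2 + #|F| + 1) * (#|F| - 1))%N.
  move: q1; set k := #|F|; rewrite !expnS expn0 => q1; nia.
move=> E; apply/eqP; rewrite -(eqn_pmul2r (_ : 0 < #|F| - 1)%N) ?subn_gt0 //.
by rewrite E.
Qed.

Lemma B_neqT : B != [set: pt].
Proof.
apply/negP => /eqP E; have := card_allpts; rewrite -E cardB.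
have q1 : (1 < #|F|)%N by rewrite (cardD1 0) (cardD1 1) !inE oner_eq0.
move: q1; rewrite cardF => q1; nia.
Qed.

End Baer.

Section Vec.
Variable F : finFieldType.
Variable n : nat.
Local Notation rv := ('rV[F]_n).
Definition dl (i : 'I_n) : rv := delta_mx 0 i.
Definition supp (e : rv) : {set 'I_n} := [set k | e 0 k != 0].

Lemma wt_supp e : wt e = #|supp e|.
Proof. by []. Qed.

Lemma dlE i k : dl i 0 k = (k == i)%:R.
Proof. by rewrite /dl mxE eqxx. Qed.

Lemma e2E a i b j k : (a *: dl i + b *: dl j) 0 k = a * (k == i)%:R + b * (k == j)%:R.
Proof. by rewrite !mxE !eqxx. Qed.

Lemma supp_e2 a i b j : supp (a *: dl i + b *: dl j) \subset [set i; j].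
Proof.
apply/subsetP => k; rewrite !inE e2E.
by case: (k == i); case: (k == j); rewrite ?mulr0 ?addr0 ?eqxx.
Qed.

Lemma wt_e2_le a i b j : (wt (a *: dl i + b *: dl j) <= 2)%N.
Proof.
rewrite wt_supp; apply: leq_trans (subset_leq_card (supp_e2 a i b j)) _.
by rewrite cards2; case: (i != j).
Qed.

Lemma supp_e2_eq a i b j : i != j -> a != 0 -> b != 0 -> supp (a *: dl i + b *: dl j) = [set i; j].
Proof.
move=> ij a0 b0; apply/setP => k; rewrite !inE e2E.
case: (eqVneq k i) => [-> | ki]; first by rewrite (negbTE ij) mulr1 mulr0 addr0 a0.
case: (eqVneq k j) => [_ | kj] /=; first by rewrite mulr1 mulr0 add0r b0.
by rewrite !mulr0 addr0 eqxx.
Qed.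

Lemma supp_sub2 e i j : supp e \subset [set i; j] -> i != j -> e = e 0 i *: dl i + e 0 j *: dl j.
Proof.
move=> /subsetP S ij; apply/rowP => k; rewrite e2E.
case: (eqVneq k i) => [ki | ki].
  by subst k; rewrite (negbTE ij) mulr1 mulr0 addr0.
case: (eqVneq k j) => [kj | kj].
  by subst k; rewrite mulr1 mulr0 add0r.
rewrite !mulr0 addr0; apply/eqP; apply: contraR ki => H.
by move: (S k); rewrite !inE H (negbTE kj) orbF => /(_ isT).
Qed.

Lemma supp_sub1 e i : supp e \subset [set i] -> e = e 0 i *: dl i + 0 *: dl i.
Proof.
move=> /subsetP S; apply/rowP => k; rewrite e2E mul0r addr0.
case: (eqVneq k i) => [ki | ki]; first by subst k; rewrite mulr1.
rewrite mulr0; apply/eqP; apply: contraR ki => H.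
by move: (S k); rewrite !inE H => /(_ isT).
Qed.

Lemma small_wt e : (wt e <= 2)%N -> e = 0 \/ exists i j a b, e = a *: dl i + b *: dl j.
Proof.
rewrite wt_supp leq_eqVlt ltnS leq_eqVlt ltnS leqn0 => /or3P [/cards2P [i [j [ij E]]] | /cards1P [i E] | E].
- right; exists i, j, (e 0 i), (e 0 j); apply: supp_sub2 => //; by rewrite E subxx.
- right; exists i, i, (e 0 i), 0; apply: supp_sub1; by rewrite E subxx.
- left; apply/rowP => k; rewrite mxE; move: E; rewrite cards_eq0 => /eqP E.
  apply/eqP; apply: contraT => H; have : k \in supp e by rewrite inE H.
  by rewrite E inE.
Qed.

End Vec.
Arguments dl {F n}.
Arguments supp {F n}.

Lemma bigmin_le (I : finType) (P : pred I) (f : I -> nat) d i0 :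
  P i0 -> (\big[minn/d]_(i | P i) f i <= f i0)%N.
Proof.
move=> Pi0; have : i0 \in index_enum I by rewrite mem_index_enum.
elim: (index_enum I) => //= a s IH; rewrite in_cons big_cons.
case/orP => [/eqP <- | Hin]; first by rewrite Pi0 geq_minl.
case: (P a); last exact: IH.
by rewrite geq_min IH ?orbT.
Qed.

Lemma bigmin_ge (I : finType) (P : pred I) (f : I -> nat) d m :
  (m <= d)%N -> (forall i, P i -> m <= f i)%N -> (m <= \big[minn/d]_(i | P i) f i)%N.
Proof.
move=> md H; elim/big_ind: _ => //.
  by move=> x y a b; rewrite leq_min a b.
Qed.

Section Code.
Variable F : finFieldType.
Local Notation pt := (point F 2).
Variable n : nat.
Variable H : 'M[F]_(3, n).
Variable B : {set pt}.
Variable Pt : 'I_n -> pt.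
Hypothesis Ptinj : injective Pt.
Hypothesis BPt : B = [set Pt i | i : 'I_n].
Hypothesis Hcol : forall i, ((col i H)^T == pvec (Pt i))%MS.
Hypothesis Gspan : spans B.
Hypothesis Gsec : forall Q, Q \notin B ->
  exists l, [/\ l \in plines F 2, Q \in l & (1 < #|l :&: B|)%N].
Hypothesis Guniq : forall Q l1 l2, Q \notin B ->
  l1 \in plines F 2 -> Q \in l1 -> (1 < #|l1 :&: B|)%N ->
  l2 \in plines F 2 -> Q \in l2 -> (1 < #|l2 :&: B|)%N -> l1 = l2.
Hypothesis Gout : exists Q, Q \notin B.
Hypothesis G3 : exists X Y Z, [/\ [&& X \in B, Y \in B & Z \in B], X != Y,
   (Z != X) && (Z != Y) & Z \in pline X Y].
Hypothesis Gn : (3 <= n)%N.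

Local Notation HT := (H^T).
Definition h i := row i HT.
Local Notation C := (code_of_pcm H).

Lemma hE i : (h i == pvec (Pt i))%MS.
Proof. by rewrite /h -tr_col. Qed.

Lemma h_sub Q i : (pvec Q <= h i)%MS -> Q = Pt i.
Proof. move=> S; apply: sub_pvec; apply: submx_trans S _; by case/andP: (hE i). Qed.

Lemma pvec_h i : (pvec (Pt i) <= h i)%MS.
Proof. by case/andP: (hE i). Qed.

Lemma h_neq0 i : h i != 0.
Proof.
apply: contraNneq (pvec_neq0 (Pt i)) => h0; rewrite -submx0; apply: submx_trans (pvec_h i) _; by rewrite h0 sub0mx.
Qed.

Lemma synE a i b j : (a *: dl i + b *: dl j) *m HT = a *: h i + b *: h j.
Proof. by rewrite mulmxDl -!scalemxAl /dl -!rowE. Qed.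

Lemma kerE x : (x \in codeset C) = (x *m HT == 0).
Proof. by rewrite inE /code_of_pcm sub_kermx. Qed.

Lemma BPtP Q : Q \in B -> exists i, Q = Pt i.
Proof. by rewrite BPt => /imsetP [i _ ->]; exists i. Qed.

Lemma Pt_in i : Pt i \in B.
Proof. by rewrite BPt imset_f. Qed.

Lemma colsub i j : (col_mx (pvec (Pt i)) (pvec (Pt j)) <= col_mx (h i) (h j))%MS.
Proof.
rewrite col_mx_sub; apply/andP; split.
  by apply: submx_trans (pvec_h i) _; rewrite -addsmxE addsmxSl.
by apply: submx_trans (pvec_h j) _; rewrite -addsmxE addsmxSr.
Qed.

Lemma zero_wt2 e : e *m HT = 0 -> (wt e <= 2)%N -> e = 0.
Proof.
move=> He /small_wt [// | [i [j [a [b Ee]]]]].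
move: He; rewrite Ee synE => S.
case: (eqVneq i j) => [ij | ij].
  subst j; move/eqP: S; rewrite -scalerDl scaler_eq0 (negbTE (h_neq0 i)) orbF => /eqP ab.
  by rewrite -scalerDl ab scale0r.
have a0 : a = 0.
  apply/eqP; apply: contraT => a0.
  have : (h i <= h j)%MS.
    apply/sub_rVP; exists (- (a^-1 * b)).
    apply: (scalerI a0); rewrite scalerA mulrN mulrA mulfV // mul1r scaleNr.
    by apply/eqP; rewrite -subr_eq0 opprK S.
  move=> hij; have : Pt i = Pt j by apply: h_sub; apply: submx_trans (pvec_h i) hij.
  by move/Ptinj => E; rewrite E eqxx in ij.
move: S; rewrite a0 scale0r add0r => /eqP; rewrite scaler_eq0 (negbTE (h_neq0 j)) orbF => /eqP b0.
by rewrite ?a0 ?b0 !scale0r addr0.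
Qed.

Lemma code_dim_val : code_dim C = (n - 3)%N.
Proof.
rewrite /code_dim /code_of_pcm mxrank_ker; congr (_ - _)%N.
apply/eqP; rewrite eqn_leq rank_leq_col /=.
apply: (@leq_trans (\rank (\sum_(P in B) <<pvec P>>)%MS)).
  by move: Gspan; rewrite /spans /row_full => /eqP ->.
apply: mxrankS; apply/sumsmx_subP => P PB; rewrite genmxE.
have [i ->] := BPtP PB.
exact: submx_trans (pvec_h i) (row_sub _ _).
Qed.

Lemma min_dist_val : min_dist C = 3%N.
Proof.
apply/eqP; rewrite eqn_leq; apply/andP; split; last first.
  apply: bigmin_ge => // c /andP [cC cn0]; rewrite ltnNge; apply/negP => W.
  by move: cn0; rewrite (zero_wt2 _ W) ?eqxx //; apply/eqP; rewrite -kerE.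
have [X [Y [Z [/and3P [XB YB ZB] XY /andP [ZX ZY] ZXY]]]] := G3.
have [i Ei] := BPtP XB; have [j Ej] := BPtP YB; have [k Ek] := BPtP ZB.
subst X Y Z.
have : (h k <= col_mx (h i) (h j))%MS.
  apply: submx_trans (_ : h k <= pvec (Pt k))%MS _; first by case/andP: (hE k).
  by apply: submx_trans (colsub i j); rewrite -mem_pline.
move/span2P => [a [b hk]].
set c := a *: dl i + b *: dl j - 1 *: dl k.
have ki : k != i by apply: contraNneq ZX => ->.
have kj : k != j by apply: contraNneq ZY => ->.
have cC : c *m HT == 0.
  by rewrite /c mulmxBl synE -scalemxAl /dl -rowE -/(h k) scale1r hk subrr.
have ck : c 0 k = -1.
  by rewrite /c !mxE !eqxx (negbTE ki) (negbTE kj) /= !mulr0 !addr0 mulr1 add0r.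
rewrite /min_dist; apply: leq_trans (@bigmin_le _ (fun c => (c \in codeset C) && (c != 0)) (@wt F n) n c _) _.
  rewrite kerE cC /=; apply/eqP => c0; move: ck; rewrite c0 mxE => /eqP.
  by rewrite eq_sym oppr_eq0 oner_eq0.
rewrite wt_supp.
have : supp c \subset k |: [set i; j].
  apply/subsetP => t; rewrite !inE /c !mxE !eqxx /=.
  case: (eqVneq t k) => //; case: (eqVneq t i) => //; case: (eqVneq t j) => //.
  by move=> _ _ _; rewrite /= !mulr0n !mulr0 !addr0 subrr eqxx.
move/subset_leq_card => S; apply: leq_trans S _.
rewrite cardsU1 cards2; by case: (_ \notin _); case: (i != j).
Qed.


Lemma wt0 : @wt F n 0 = 0%N.
Proof. by apply/eqP; rewrite cards_eq0; apply/eqP/setP => k; rewrite !inE mxE eqxx. Qed.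

Lemma wt_e1 (a : F) (i : 'I_n) : (wt (a *: dl i + 0 *: dl i) <= 1)%N.
Proof.
rewrite wt_supp; apply: leq_trans (subset_leq_card (supp_e2 a i 0 i)) _.
by rewrite setUid cards1.
Qed.

Lemma find_e (s : 'rV[F]_3) : exists e, e *m HT = s /\ (wt e <= 2)%N /\
   ((exists Q, (pvec Q == s)%MS /\ Q \in B) -> (wt e <= 1)%N).
Proof.
case: (eqVneq s 0) => [-> | sn0].
  exists 0; rewrite mul0mx wt0; by [].
have [Q Qs] := normalize sn0.
have sQ : (s <= pvec Q)%MS by case/andP: Qs.
case: (boolP (Q \in B)) => QB.
  have [i Ei] := BPtP QB; subst Q.
  have : (s <= h i)%MS by apply: submx_trans sQ (pvec_h i).
  move/sub_rVP => [a ->]; exists (a *: dl i + 0 *: dl i).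
  by rewrite synE scale0r addr0 wt_e1 (leq_trans (wt_e1 a i)).
have [l [lp Ql /card_gt1P [X [Y [XI YI XY]]]]] := Gsec QB.
move: XI YI; rewrite !in_setI => /andP [Xl XB] /andP [Yl YB].
have [i Ei] := BPtP XB; have [j Ej] := BPtP YB; subst X Y.
have : (s <= col_mx (h i) (h j))%MS.
  apply: submx_trans sQ _; apply: submx_trans (colsub i j).
  by rewrite -mem_pline -(plines_eq lp XY Xl Yl).
move/span2P => [a [b Es]]; exists (a *: dl i + b *: dl j).
rewrite synE -Es wt_e2_le; split=> //; split=> // [[Q' [Q's Q'B]]].
move/eqmxP: Q's => E1; move/eqmxP: Qs => E2.
have QQ' : Q' = Q by apply: pvec_inj; apply/eqmxP; exact: eqmx_trans E1 (eqmx_sym E2).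
by rewrite -QQ' Q'B in QB.
Qed.

Lemma dist_le2 (x : 'rV[F]_n) : (dist_code C x <= 2)%N.
Proof.
have [e [He [W _]]] := find_e (x *m HT).
rewrite /dist_code; apply: leq_trans (@bigmin_le _ (fun c => c \in codeset C) (hdist x) n (x - e) _) _.
  by rewrite kerE mulmxBl He subrr.
by rewrite /hdist subKr.
Qed.

Lemma deep (x : 'rV[F]_n) (Q : pt) : Q \notin B -> (pvec Q <= x *m HT)%MS -> forall c, c \in codeset C -> (2 <= hdist x c)%N.
Proof.
move=> QB Qx c; rewrite kerE => /eqP cC; rewrite /hdist ltnNge; apply/negP => W.
have : (wt (x - c) <= 2)%N by apply: leq_trans W _.
move/small_wt => [e0 | [i [j [a [b Ee]]]]].
  move: Qx; rewrite -[x](subrK c) e0 add0r cC => /sub_rVP [a0]; rewrite scaler0 => /eqP.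
  by rewrite (negbTE (pvec_neq0 Q)).
have synx : x *m HT = (x - c) *m HT by rewrite mulmxBl cC subr0.
case: (eqVneq a 0) => [a0 | an0].
  have : (pvec Q <= h j)%MS.
    apply: submx_trans Qx _; rewrite synx Ee synE a0 scale0r add0r; exact: scalemx_sub.
  by move/h_sub => E; rewrite E Pt_in in QB.
case: (eqVneq b 0) => [b0 | bn0].
  have : (pvec Q <= h i)%MS.
    apply: submx_trans Qx _; rewrite synx Ee synE b0 scale0r addr0; exact: scalemx_sub.
  by move/h_sub => E; rewrite E Pt_in in QB.
case: (eqVneq i j) => [ij | ij].
  subst j; have : (pvec Q <= h i)%MS.
    apply: submx_trans Qx _; rewrite synx Ee synE -scalerDl; exact: scalemx_sub.
  by move/h_sub => E; rewrite E Pt_in in QB.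
by move: W; rewrite Ee wt_supp supp_e2_eq // cards2 ij.
Qed.

Lemma cover_val : covering_radius C = 2%N.
Proof.
apply/eqP; rewrite eqn_leq; apply/andP; split.
  by apply/bigmax_leqP => x _; exact: dist_le2.
have [Q QB] := Gout.
have rf : row_full HT.
  rewrite /row_full; apply/eqP/anti_leq; rewrite rank_leq_col /=.
  apply: (@leq_trans (\rank (\sum_(P in B) <<pvec P>>)%MS)).
    by move: Gspan; rewrite /spans /row_full => /eqP ->.
  apply: mxrankS; apply/sumsmx_subP => P PB; rewrite genmxE.
  have [i ->] := BPtP PB.
  exact: submx_trans (pvec_h i) (row_sub _ _).
have [G HG] := row_fullP rf.
set x := pvec Q *m G.
apply: leq_trans (leq_bigmax x).
apply: bigmin_ge; first exact: ltnW.
move=> c cC; apply: (deep QB) cC.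
by rewrite /x -mulmxA HG mulmx1 submx_refl.
Qed.


Lemma colsub' i j : (col_mx (h i) (h j) <= col_mx (pvec (Pt i)) (pvec (Pt j)))%MS.
Proof.
rewrite col_mx_sub; apply/andP; split.
  by apply: submx_trans (_ : h i <= pvec (Pt i))%MS _; [case/andP: (hE i) | rewrite -addsmxE addsmxSl].
by apply: submx_trans (_ : h j <= pvec (Pt j))%MS _; [case/andP: (hE j) | rewrite -addsmxE addsmxSr].
Qed.

Variable mu : nat.
Hypothesis Gmu : forall Q l, Q \notin B -> l \in plines F 2 -> Q \in l ->
  (1 < #|l :&: B|)%N -> 'C(#|l :&: B|, 2) = mu.

Lemma apmcf_val : is_APMCF C 2%N mu.
Proof.
split; first exact: cover_val.
move=> x dx.
set s := x *m HT.
have hd : forall e, hdist x (x - e) = wt e by move=> e; rewrite /hdist subKr.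
have inC : forall e, e *m HT = s -> x - e \in codeset C.
  by move=> e He; rewrite kerE mulmxBl He subrr.
have dle : forall e, e *m HT = s -> (2 <= wt e)%N.
  move=> e He; rewrite -hd -dx /dist_code.
  exact: (@bigmin_le _ (fun c => c \in codeset C) (hdist x) n (x - e) (inC e He)).
have sn0 : s != 0.
  apply/eqP => s0; have := dle 0; rewrite mul0mx wt0 => /(_ (esym s0)); by [].
have [Q0 Qs] := normalize sn0.
have Q0B : Q0 \notin B.
  apply/negP => QB; have [e [He [_ W1]]] := find_e s.
  have := dle e He; have := W1 (ex_intro _ Q0 (conj Qs QB)); lia.
have sQ : (s <= pvec Q0)%MS by case/andP: Qs.
have Qs' : (pvec Q0 <= s)%MS by case/andP: Qs.
have [l0 [lp Ql cl]] := Gsec Q0B.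
set E := [set e : 'rV[F]_n | (e *m HT == s) && (wt e == 2)%N].
have step1 : [set c in codeset C | (hdist x c == 2)%N] = [set x - e | e in E].
  apply/setP => c; rewrite inE; apply/andP/imsetP.
  - move=> [cC hc]; exists (x - c); last by rewrite subKr.
    rewrite inE; apply/andP; split; last exact: hc.
    by move: cC; rewrite kerE => /eqP cC; rewrite mulmxBl cC subr0.
  - move=> [e]; rewrite inE => /andP [/eqP He /eqP we] ->; split; first exact: inC.
    by rewrite hd we.
rewrite step1 card_in_imset; last by move=> e1 e2 _ _; apply: subrI.
set I0 := [set i | Pt i \in l0].
have inj : {in E &, injective supp}.
  move=> e1 e2; rewrite !inE => /andP [/eqP H1 /eqP W1] /andP [/eqP H2 _] S.
  apply: subr0_eq; apply: zero_wt2; first by rewrite mulmxBl H1 H2 subrr.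
  rewrite -W1 !wt_supp; apply: subset_leq_card; apply/subsetP => k; rewrite !inE !mxE.
  move=> nz; apply/negP => /eqP z; move: nz; rewrite z add0r oppr_eq0 => nz2.
  have : k \in supp e1 by rewrite S inE.
  by rewrite inE z eqxx.
have step2 : supp @: E = [set A : {set 'I_n} | A \subset I0 & #|A| == 2%N].
  apply/setP => A; rewrite inE; apply/imsetP/andP.
  - move=> [e]; rewrite inE => /andP [/eqP He /eqP we] ->.
    split; last by rewrite -wt_supp we.
    move: (we); rewrite wt_supp => /eqP /cards2P [i [j [ij Ss]]].
    have Ee : e = e 0 i *: dl i + e 0 j *: dl j by apply: supp_sub2; rewrite ?Ss ?subxx.
    have PQ : Pt i != Pt j by apply: contra ij => /eqP /Ptinj ->.
    have Qin : Q0 \in pline (Pt i) (Pt j).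
      rewrite mem_pline; apply: submx_trans Qs' _; apply: submx_trans (colsub' i j).
      by rewrite -He Ee synE; apply/span2P; exists (e 0 i), (e 0 j).
    have cl' : (1 < #|pline (Pt i) (Pt j) :&: B|)%N.
      by apply/card_gt1P; exists (Pt i), (Pt j); rewrite !in_setI pline_l pline_r !Pt_in.
    have E0 := Guniq Q0B (pline_in PQ) Qin cl' lp Ql cl.
    rewrite Ss; apply/subsetP => k; rewrite !inE => /orP [] /eqP ->; by rewrite -E0 ?pline_l ?pline_r.
  - move=> [AI /cards2P [i [j [ij EA]]]].
    move: AI; rewrite EA => /subsetP AI.
    have Pil : Pt i \in l0 by move: (AI i); rewrite !inE eqxx => /(_ isT).
    have Pjl : Pt j \in l0 by move: (AI j); rewrite !inE eqxx orbT => /(_ isT).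
    have PQ : Pt i != Pt j by apply: contra ij => /eqP /Ptinj ->.
    have l0E := plines_eq lp PQ Pil Pjl.
    have : (s <= col_mx (h i) (h j))%MS.
      apply: submx_trans sQ _; apply: submx_trans (colsub i j).
      by rewrite -mem_pline -l0E.
    move/span2P => [a [b Es]].
    have an0 : a != 0.
      apply: contraNneq Q0B => a0; have : (pvec Q0 <= h j)%MS.
        by apply: submx_trans Qs' _; rewrite Es a0 scale0r add0r scalemx_sub.
      by move/h_sub ->; rewrite Pt_in.
    have bn0 : b != 0.
      apply: contraNneq Q0B => b0; have : (pvec Q0 <= h i)%MS.
        by apply: submx_trans Qs' _; rewrite Es b0 scale0r addr0 scalemx_sub.
      by move/h_sub ->; rewrite Pt_in.
    exists (a *: dl i + b *: dl j); last by rewrite supp_e2_eq.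
    by rewrite inE synE -Es eqxx wt_supp supp_e2_eq // cards2 ij.
rewrite -(card_in_imset inj) step2 cards_draws.
have -> : #|I0| = #|l0 :&: B|.
  have -> : l0 :&: B = Pt @: I0.
    apply/setP => Z; rewrite in_setI; apply/andP/imsetP.
    - move=> [Zl ZB]; have [i Ei] := BPtP ZB; exists i => //; by rewrite inE -Ei.
    - by move=> [i]; rewrite inE => Hi ->; rewrite Hi Pt_in.
  by rewrite card_imset.
exact: Gmu Q0B lp Ql cl.
Qed.

End Code.

End Helpers.


Theorem proposition5p4 (F : finFieldType) (r : nat) (B : {set point F 2}) :
  #|F| = (r ^ 2)%N ->
  baer_subplane r B ->
  let q := (r ^ 2)%N in
  let n := (q + r + 1)%N in
  let mu := ((q + r) %/ 2)%N in
  [/\ #|B| = n,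
      optimal_saturating B mu &
      forall H : 'M[F]_(3, n), pcm_of_points H B ->
        let C := code_of_pcm H in
        [/\ code_dim C = (n - 3)%N, min_dist C = 3%N,
            covering_radius C = 2%N & is_APMCF C 2 mu]].
Proof.
move=> cardF [L [h1 h2 h3 [P1 [P2 [P3 [P4 [HP Hu Hc]]]]] h5]] q n mu.
have HP3 : [&& P1 \in B, P2 \in B & P3 \in B] by case/and4P: HP => -> -> -> _.
have P12 : P1 != P2.
  by move: Hu => /= /andP [H1 _]; move: H1; rewrite !inE negb_or => /andP [].
have ncol : ~~ pcollinear P1 P2 P3 by case/and4P: Hc.
have q1 : (1 < #|F|)%N by rewrite (cardD1 0%R) (cardD1 1%R) !inE GRing.oner_eq0.
have r2 : (2 <= r)%N by move: q1; rewrite cardF; clear; case: r => [|[|r']].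
have cB : #|B| = n.
  by rewrite /n /q; exact: (cardB cardF h1 h2 h3 h5 HP3 P12 ncol).
have smu : forall Q, Q \notin B -> secmult B Q = mu.
  move=> Q QB; rewrite /mu /q.
  exact: (secmult_val cardF h1 h2 h3 h5 HP3 P12 ncol QB).
have Gsec : forall Q, Q \notin B ->
    exists l, [/\ l \in plines F 2, Q \in l & (1 < #|l :&: B|)%N].
  by move=> Q QB; exact: (sec_exists cardF h1 h2 h3 h5 HP3 P12 ncol QB).
have Guniq : forall Q l1 l2, Q \notin B ->
    l1 \in plines F 2 -> Q \in l1 -> (1 < #|l1 :&: B|)%N ->
    l2 \in plines F 2 -> Q \in l2 -> (1 < #|l2 :&: B|)%N -> l1 = l2.
  by move=> Q l1 l2; exact: (sec_unique h1 h2 h3).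
have BT : B != [set: point F 2].
  exact: (B_neqT cardF h1 h2 h3 h5 HP3 P12 ncol).
have Gspan : spans B by apply: spansB HP3 ncol.
split => //.
  split; last exact: smu.
  by split => // Q QB; rewrite smu.
move=> H [Pt [Ptinj BPt Hcol]] C.
have Gout : exists Q, Q \notin B.
  apply/existsP; apply: contraR BT => /existsPn Hn; apply/eqP/setP => Q.
  by rewrite inE; move: (Hn Q); rewrite negbK.
have G3 : exists X Y Z, [/\ [&& X \in B, Y \in B & Z \in B], X != Y,
   (Z != X) && (Z != Y) & Z \in pline X Y].
  case/and3P: HP3 => B1 B2 B3.
  have := D2 h1 h2 h5 B1 B2 P12.
  rewrite (cardsD1 P1) (cardsD1 P2) !in_setD1 !in_setI pline_l pline_r B1 B2 eq_sym P12 => E.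
  have : (0 < #|pline P1 P2 :&: B :\ P1 :\ P2|)%N.
    move: E => /= /eqP; rewrite !add1n !eqSS => /eqP E; by rewrite -ltnS E.
  case/card_gt0P => Z; rewrite !in_setD1 in_setI => /and4P [ZP2 ZP1 Zl ZB].
  exists P1, P2, Z; by rewrite B1 B2 ZB ZP1 ZP2 Zl P12.
have Gn : (3 <= n)%N by rewrite /n /q addn1 ltnS; apply: leq_trans r2 (leq_addl _ _).
have Gmu : forall Q l, Q \notin B -> l \in plines F 2 -> Q \in l ->
    (1 < #|l :&: B|)%N -> 'C(#|l :&: B|, 2) = mu.
  move=> Q l QB lp Ql cl; rewrite (h5 _ (D3 h1 h2 lp cl)) bin2 /= -divn2 /mu /q.
  by rewrite mulSn mulnn [(r + _)%N]addnC.
split.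
- by rewrite /C; apply: (code_dim_val (B:=B) (Pt:=Pt)).
- by rewrite /C; apply: (min_dist_val (B:=B) (Pt:=Pt)).
- by rewrite /C; apply: (cover_val (B:=B) (Pt:=Pt)).
- by rewrite /C; apply: (apmcf_val (B:=B) (Pt:=Pt)).
Qed.
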